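(* For every subdirectly irreducible state-morphism algebra $(\mathbf A,\tau)$ there is a subdirectly irreducible algebra $\mathbf B$ of the same type as $\mathbf A$ such that $(\mathbf A,\tau)$ is $\mathbf B$-subdiagonal, i.e. $(\mathbf A,\tau)$ embeds into $D(\mathbf B)=(\mathbf B\times\mathbf B,\tau_B)$.
   Context: Let $F$ be an arbitrary algebraic type. A state-morphism on an algebra $\mathbf A$ of type $F$ is an endomorphism $\tau:\mathbf A\to\mathbf A$ with $\tau\circ\tau=\tau$; $(\mathbf A,\tau)$, viewed as an algebra of type $F$ extended by the unary operation $\tau$, is a state-morphism algebra, and subdirect irreducibility of $(\mathbf A,\tau)$ refers to this extended algebra. For an algebra $\mathbf B$ of type $F$, $D(\mathbf B)=(\mathbf B\times\mathbf B,\tau_B)$ with $\tau_B(x,y)=(x,x)$ is the diagonal state-morphism algebra; an embedding of state-morphism algebras is an injective homomorphism of type $F$ commuting with the unary operations. *)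

(* Defs.v *)
From mathcomp Require Import all_boot.
Set Implicit Arguments. Unset Strict Implicit. Unset Printing Implicit Defensive.

Record signature := Signature { sym : Type; arity : sym -> nat }.

Record algebra (F : signature) := Algebra {
  carrier :> Type;
  op : forall f : sym F, ('I_(arity f) -> carrier) -> carrier }.

Definition is_hom (F : signature) (A B : algebra F) (h : A -> B) : Prop :=
  forall (f : sym F) (args : 'I_(arity f) -> A),
    h (op args) = op (fun i => h (args i)).

Definition is_congruence (F : signature) (A : algebra F) (th : A -> A -> Prop) : Prop :=
  [/\ (forall x, th x x), (forall x y, th x y -> th y x),
      (forall x y z, th x y -> th y z -> th x z) &
      (forall (f : sym F) (a b : 'I_(arity f) -> A),
          (forall i, th (a i) (b i)) -> th (op a) (op b))].

(* Subdirectly irreducible: the intersection of all congruences different from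
   the identity congruence is different from the identity congruence
   (this also forces |A| >= 2). *)
Definition subdirectly_irreducible (F : signature) (A : algebra F) : Prop :=
  exists a b : A, a <> b /\
    forall th, is_congruence th -> (exists x y, x <> y /\ th x y) -> th a b.

Definition state_morphism (F : signature) (A : algebra F) (tau : A -> A) : Prop :=
  @is_hom F A A tau /\ (forall x, tau (tau x) = tau x).

Definition ext_sig (F : signature) : signature :=
  @Signature (option (sym F))
    (fun o => match o with Some f => arity f | None => 1 end).

Definition sm_algebra (F : signature) (A : algebra F) (tau : A -> A)
  : algebra (ext_sig F) :=
  @Algebra (ext_sig F) A
    (fun o => match o as o0 return ('I_(arity (s := ext_sig F) o0) -> A) -> A with
              | Some f => fun args => @op F A f args
              | None => fun args => tau (args ord0)
              end).

Definition prod_algebra (F : signature) (B : algebra F) : algebra F :=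
  @Algebra F (B * B)%type
    (fun f args => (op (fun i => (args i).1), op (fun i => (args i).2))).

Definition diag_tau (F : signature) (B : algebra F) (p : (B * B)%type) : (B * B)%type :=
  (p.1, p.1).

Definition subdiagonal (F : signature) (A : algebra F) (tau : A -> A) (B : algebra F) : Prop :=
  exists h : A -> prod_algebra B,
    [/\ injective h, @is_hom F A (prod_algebra B) h &
        forall x, h (tau x) = diag_tau (h x)].

(* Main.v *)
Require Import Defs.
From mathcomp Require Import all_boot.
From mathcomp Require Import boolp classical_sets.
Set Implicit Arguments. Unset Strict Implicit.

Section Cong.
Variables (F : signature) (A : algebra F).

Lemma finite_common (C : (A -> A -> Prop) -> Prop)
  (tot : forall c d, C c -> C d ->
     (forall x y, c x y -> d x y) \/ (forall x y, d x y -> c x y))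
  (refl : forall c, C c -> forall x, c x x)
  n (a b : 'I_n -> A) (s : seq 'I_n) :
  (forall i, a i = b i \/ exists c, C c /\ c (a i) (b i)) ->
  (forall i, i \in s -> a i = b i) \/
  exists c, C c /\ forall i, i \in s -> c (a i) (b i).
Proof.
move=> H; elim: s => [|j s IH]; first by left.
case: IH => [Heq|[c [Cc Hc]]]; case: (H j) => [ej|[d [Cd Hd]]].
- left => i; rewrite inE => /orP[/eqP->//|]; exact: Heq.
- right; exists d; split=> // i; rewrite inE => /orP[/eqP->//|/Heq->]; exact: refl.
- right; exists c; split=> // i; rewrite inE => /orP[/eqP->|/Hc//]; rewrite ej; exact: refl.
- case: (tot c d Cc Cd) => Hcd.
  + right; exists d; split=> // i; rewrite inE => /orP[/eqP->//|/Hc]; exact: Hcd.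
  + right; exists c; split=> // i; rewrite inE => /orP[/eqP->|/Hc//]; exact: Hcd.
Qed.

Lemma max_cong (a b : A) : a <> b ->
  exists phi : A -> A -> Prop, [/\ is_congruence phi, ~ phi a b &
    forall psi, is_congruence psi -> ~ psi a b ->
      (forall x y, phi x y -> psi x y) -> forall x y, psi x y -> phi x y].
Proof.
move=> nab.
pose S := {R : A -> A -> Prop | is_congruence R /\ ~ R a b}.
have eqc : is_congruence (@eq A).
  split=> //; [by move=> x y z -> | by move=> f u v H; congr op; apply: funext].
pose t0 : S := exist _ (@eq A) (conj eqc nab).
pose le (s t : S) := `[< forall x y, sval s x y -> sval t x y >].
have [|||t tmax] := @ZL_preorder S t0 le.
- by move=> s; apply/asboolP.
- by move=> r s t /asboolP H1 /asboolP H2; apply/asboolP => x y /H1/H2.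
- move=> C Ctot.
  pose C' (c : A -> A -> Prop) := exists s, C s /\ c = sval s.
  have Ccong c : C' c -> is_congruence c.
    by case=> s [_ ->]; case: (proj2_sig s).
  have Cnab c : C' c -> ~ c a b.
    by case=> s [_ ->]; case: (proj2_sig s).
  have tot c d : C' c -> C' d ->
     (forall x y, c x y -> d x y) \/ (forall x y, d x y -> c x y).
    case=> s [Cs ->]; case=> s' [Cs' ->].
    by case: (Ctot s s' Cs Cs') => /asboolP H; [left|right].
  have refl c : C' c -> forall x, c x x by move=> /Ccong [].
  pose U x y := x = y \/ exists c, C' c /\ c x y.
  have Ucong : is_congruence U.
    split.
    + by move=> x; left.
    + move=> x y [->|[c [Cc H]]]; first by left.
      by right; exists c; split=> //; case: (Ccong c Cc) => _ sy _ _; exact: sy.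
    + move=> x y z [->//|[c [Cc H]]] [<-|[d [Cd H']]]; first by right; exists c.
      right; case: (Ccong c Cc) => _ _ trc _; case: (Ccong d Cd) => _ _ trd _.
      case: (tot c d Cc Cd) => Hcd.
      * by exists d; split=> //; apply: (trd _ y); [exact: Hcd|exact: H'].
      * by exists c; split=> //; apply: (trc _ y); [exact: H|exact: Hcd].
    + move=> f u v H.
      case: (finite_common tot refl (enum 'I_(arity f)) H) => [Heq|[c [Cc Hc]]].
      * by left; congr op; apply: funext => i; apply: Heq; rewrite mem_enum.
      * right; exists c; split=> //; case: (Ccong c Cc) => _ _ _ cc.
        by apply: cc => i; apply: Hc; rewrite mem_enum.
  have nU : ~ U a b by case=> [//|[c [Cc H]]]; exact: (Cnab c Cc).
  exists (exist _ U (conj Ucong nU)) => s Cs; apply/asboolP => x y H.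
  by right; exists (sval s); split=> //; exists s.
- exists (sval t); split; [exact: (proj1 (proj2_sig t))|exact: (proj2 (proj2_sig t))|].
  move=> psi pc pn sub.
  have := tmax (exist _ psi (conj pc pn)).
  by move=> H; apply/asboolP; apply: H; apply/asboolP.
Qed.

End Cong. Section Q. Variables (F : signature) (A : algebra F).
Variables (phi : A -> A -> Prop) (phic : is_congruence phi).

Definition qcar := {P : A -> Prop | exists x, P = phi x}.
Definition cl (x : A) : qcar := exist _ (phi x) (ex_intro _ x erefl).
Definition rep (p : qcar) : A := sval (cid (proj2_sig p)).

Lemma sig_eq (p q : qcar) : sval p = sval q -> p = q.
Proof.
case: p => P HP; case: q => Q HQ /= E; subst Q.
by congr exist; apply: Prop_irrelevance.
Qed.

Lemma cl_eq x y : cl x = cl y <-> phi x y.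
Proof.
case: phic => rf sy tr _; split.
- move/(congr1 sval) => /= E; rewrite E; exact: rf.
- move=> H; apply: sig_eq => /=; apply: funext => z; apply: propext; split.
  + by move=> H'; apply: (tr _ x); [apply: sy|].
  + by move=> H'; apply: (tr _ y).
Qed.

Lemma rep_cl p : cl (rep p) = p.
Proof.
apply: sig_eq => /=; rewrite /rep; case: (cid _) => x /= ->; done.
Qed.

Definition qalg : algebra F :=
  @Algebra F qcar (fun f args => cl (op (fun i => rep (args i)))).

Lemma cl_hom f (args : 'I_(arity f) -> A) :
  cl (op args) = @op F qalg f (fun i => cl (args i)).
Proof.
apply/cl_eq; case: phic => rf sy tr cc; apply: cc => i.
by apply: sy; apply/cl_eq; rewrite rep_cl.
Qed.

End Q.

Theorem theorem3p7 (F : signature) (A : algebra F) (tau : A -> A) :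
  @state_morphism F A tau ->
  subdirectly_irreducible (@sm_algebra F A tau) ->
  exists B : algebra F, @subdirectly_irreducible F B /\ @subdiagonal F A tau B.
Proof.
move=> [tauh tauid] [a [b [nab Hsi]]].
have [phi [phic phin phimax]] := @max_cong F A a b nab.
exists (qalg phi); split.
- exists (cl phi a), (cl phi b); split.
    by move/(cl_eq phic).
  move=> th thc [p [q [npq thpq]]].
  pose psi x y := th (cl phi x) (cl phi y).
  have psic : is_congruence psi.
    case: thc => rf sy tr cc; split.
    + by move=> x; apply: rf.
    + by move=> x y; apply: sy.
    + by move=> x y z; apply: tr.
    + by move=> f u v H; rewrite /psi !(cl_hom phic); apply: cc.
  have [//|npsi] := pselect (psi a b).
  exfalso; apply: npq.
  have sub : forall x y, phi x y -> psi x y.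
    move=> x y /(cl_eq phic) E; rewrite /psi E; by case: thc.
  have H : psi (rep p) (rep q) by rewrite /psi !rep_cl.
  have := phimax psi psic npsi sub _ _ H => /(cl_eq phic).
  by rewrite !rep_cl.
- pose h (x : A) : prod_algebra (qalg phi) := (cl phi (tau x), cl phi x).
  exists h; split.
  + move=> x y E.
    have E1 : cl phi (tau x) = cl phi (tau y) := congr1 fst E.
    have E2 : cl phi x = cl phi y := congr1 snd E.
    have [//|nxy] := pselect (x = y).
    pose chi x y := phi x y /\ phi (tau x) (tau y).
    have chic : is_congruence (A := sm_algebra tau) chi.
      case: phic => rf sy tr cc; split.
      * by move=> z; split.
      * by move=> z w [H1 H2]; split; apply: sy.
      * by move=> z w v [H1 H2] [H3 H4]; split; [apply: tr H3|apply: tr H4].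
      * move=> [f|] u v H /=.
        -- split; first by apply: cc => i; case: (H i).
           rewrite !tauh; apply: cc => i; by case: (H i).
        -- by case: (H ord0) => _ H2; split=> //; rewrite !tauid.
    exfalso; apply: phin.
    have [H1 _] : chi a b.
      apply: (Hsi chi chic); exists x, y; split=> //.
      split; apply/(cl_eq phic); [exact: E2|exact: E1].
    exact: H1.
  + move=> f args; by rewrite /h tauh !(cl_hom phic).
  + by move=> x; rewrite /h /diag_tau /= tauid.
Qed.
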